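(* Let $\mathcal{I}\subseteq\mathcal{M}_m$ be decreasing, $r=\max_{u\in\mathcal{I}}\deg u$, and $f,g\in\mathcal{I}_r$ with $\deg(\gcd(f,g))=r-3$. Then $$\bigl|\mathrm{LTA}(m,2)\cdot f+\mathrm{LTA}(m,2)\cdot g\bigr|=\bigl|\mathrm{LTA}(m,2)\cdot f\bigr|\cdot\bigl|\mathrm{LTA}(m,2)\cdot g\bigr|.$$
   Context: $\mathcal{M}_m$: square-free monomials in $x_0,\dots,x_{m-1}$ in $\mathbf{R}_m=\mathbb{F}_2[x_0,\dots,x_{m-1}]/(x_i^2-x_i)$; $\operatorname{ind}(u)$ the variable indices, $\deg u=|\operatorname{ind}u|$, $\gcd$ has index set the intersection. For equal-degree monomials with increasing indices, $u\preceq_{sh}v$ iff componentwise $\le$; $u\preceq v$ iff $u\preceq_{sh}v^*\mid v$ for some $v^*$; $\mathcal{I}$ decreasing if $f\in\mathcal{I}$, $g\preceq f\Rightarrow g\in\mathcal{I}$; $\mathcal{I}_r$ its degree-$r$ elements. $\mathrm{LTA}(m,2)$: pairs $(\mathbf{B},\varepsilon)$, $\mathbf{B}=(b_{i,j})$ binary lower unitriangular, $\varepsilon\in\mathbb{F}_2^m$, acting on monomial $u$ by $x_i\mapsto x_i+\sum_{j<i}b_{i,j}x_j+\varepsilon_i$ for $i\in\operatorname{ind}u$; $\mathrm{LTA}(m,2)\cdot f$ is the orbit. $A+B=\{a+b\}$. *)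

(* Defs.v *)
From HB Require Import structures.
From mathcomp Require Import all_boot all_order all_algebra.
Set Implicit Arguments. Unset Strict Implicit. Unset Printing Implicit Defensive.
Import GRing.Theory.
Local Open Scope ring_scope.

(* Square-free monomials in x_0..x_{m-1} are identified with their index sets. *)
Notation monomial m := ({set 'I_m}).

(* Elements of R_m = F_2[x]/(x_i^2 - x_i) are identified with Boolean functions
   F_2^m -> F_2 (the canonical isomorphism). *)
Notation point m := ({ffun 'I_m -> 'F_2}).
Notation BF m := ({ffun point m -> 'F_2}).

Definition sortedInd m (u : monomial m) : seq nat := sort leq [seq val i | i <- enum u].

Definition shle m (u v : monomial m) : bool :=
  (#|u| == #|v|)%N && all2 leq (sortedInd u) (sortedInd v).

Definition mprec m (u v : monomial m) : bool :=
  [exists w : monomial m, (w \subset v) && shle u w].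

Definition decreasing m (I : {set monomial m}) : Prop :=
  forall f g : monomial m, f \in I -> mprec g f -> g \in I.

Definition lower_unitri m (B : 'M['F_2]_m) : bool :=
  [forall i : 'I_m, forall j : 'I_m,
     if (j < i)%N then true else B i j == (i == j)%:R].

Definition lta_act m (B : 'M['F_2]_m) (eps : point m) (u : monomial m) : BF m :=
  [ffun x : point m => \prod_(i in u)
      (x i + \sum_(j : 'I_m | (j < i)%N) B i j * x j + eps i)].

Definition lta_orbit m (u : monomial m) : {set BF m} :=
  [set lta_act p.1 p.2 u | p : 'M['F_2]_m * point m & lower_unitri p.1].

Definition setsum m (A B : {set BF m}) : {set BF m} :=
  [set (a : BF m) + b | a : BF m in A, b : BF m in B].

(* Main.v *)
Require Import Defs.
From mathcomp Require Import all_boot all_order all_algebra.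
Set Implicit Arguments. Unset Strict Implicit. Unset Printing Implicit Defensive.
Import GRing.Theory.
Local Open Scope ring_scope.

Lemma F2cases (x : 'F_2) : x = 0 \/ x = 1.
Proof. case: x => [[|[|n]] H] //=; [left|right]; exact: val_inj. Qed.
Lemma ch2 : (2 \in [pchar 'F_2])%N. Proof. exact: pchar_Fp. Qed.
Lemma F2xx (x : 'F_2) : x + x = 0. Proof. by case: (F2cases x) => ->; apply/val_inj. Qed.

Section Count.
Variable m : nat.

Lemma cardZ (P : {set 'I_m}) :
  #|[set z : point m | [forall i in P, z i == 0]]| = (2 ^ (m - #|P|))%N.
Proof.
have -> : [set z : point m | [forall i in P, z i == 0]] =
   [set z : point m | z \in pffun_on (0 : 'F_2) (~: P) predT].
  apply/setP => z; rewrite !inE; apply/forall_inP/pffun_onP.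
    move=> H; split; last by [].
    apply/supportP => x; rewrite inE negbK => /H /eqP //.
  by case=> /supportP H _ x xP; apply/eqP; apply: H; rewrite inE negbK.
rewrite cardsE card_pffun_on.
have -> : #|~: P| = (m - #|P|)%N by rewrite [LHS]cardsCs setCK card_ord.
congr (_ ^ _)%N. by rewrite card_Fp.
Qed.

Lemma solcard (P : {set 'I_m}) (c : 'I_m -> point m -> 'F_2) :
  (forall (i : 'I_m) (x y : point m), (forall j : 'I_m, (j < i)%N -> x j = y j) -> c i x = c i y) ->
  #|[set x : point m | [forall i in P, x i == c i x]]| = (2 ^ (m - #|P|))%N.
Proof.
move=> Hc.
pose Phi (x : point m) : point m := [ffun i => if i \in P then x i - c i x else x i].
have Pinj : injective Phi.
  move=> x y Exy.
  have H : forall n (i : 'I_m), (i < n)%N -> x i = y i.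
    elim=> [|n IH] i //.
    rewrite ltnS leq_eqVlt => /orP [/eqP Ein | ]; last exact: IH.
    have /ffunP /(_ i) := Exy. rewrite !ffunE.
    case: (i \in P); last by [].
    have -> : c i x = c i y by apply: Hc => j; rewrite Ein; exact: IH.
    by move/addIr.
  by apply/ffunP => i; exact: (H i.+1).
rewrite -(cardZ P) -[RHS](card_preimset _ Pinj).
apply: eq_card => x; rewrite !inE.
apply/forall_inP/forall_inP => H i iP; have := H i iP; rewrite ?ffunE iP subr_eq0 //.
Qed.
End Count.
Lemma F2eq (a t : 'F_2) : (a + t == 1) = (a == 1 + t).
Proof. by case: (F2cases a) => ->; case: (F2cases t) => ->. Qed.
Lemma F2_3 (a b c d : 'F_2) : (1+a+d)+(1+b+d)+(1+c+d) = 1+(a+b+c)+d.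
Proof.
by case: (F2cases a) => ->; case: (F2cases b) => ->; case: (F2cases c) => ->; case: (F2cases d) => ->; apply/val_inj.
Qed.
Lemma F2_xcp (a b c : 'F_2) : a + b + c + a + b = c.
Proof.
by case: (F2cases a) => ->; case: (F2cases b) => ->; case: (F2cases c) => ->; apply/val_inj.
Qed.

Lemma prodF2 (I : finType) (u : {pred I}) (v : I -> 'F_2) :
  (\prod_(i in u) v i == 1) = [forall i in u, v i == 1].
Proof.
case: (boolP [forall i in u, v i == 1]) => H.
  by rewrite big1 ?eqxx // => i iu; apply/eqP/(forall_inP H).
move/forall_inPn: H => [i iu vi].
have v0 : v i = 0 by case: (F2cases (v i)) vi => -> //; rewrite eqxx.
by rewrite (bigD1 i) //= v0 mul0r.
Qed.

Section Act.
Variable m : nat.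

Definition cc (B : 'M['F_2]_m) (e : point m) (i : 'I_m) (x : point m) : 'F_2 :=
  1 + \sum_(j : 'I_m | (j < i)%N) B i j * x j + e i.

Definition supp (a : BF m) : {set point m} := [set x | a x == 1].

Lemma act1 B e u x : (lta_act B e u x == 1) = [forall i in u, x i == cc B e i x].
Proof.
rewrite /lta_act ffunE prodF2; apply: eq_forallb_in => i _.
by rewrite -addrA F2eq /cc addrA.
Qed.

Lemma cc_dep B e (i : 'I_m) (x y : point m) :
  (forall j : 'I_m, (j < i)%N -> x j = y j) -> cc B e i x = cc B e i y.
Proof.
move=> H; rewrite /cc; congr (_ + _ + _); apply: eq_bigr => j ji; by rewrite H.
Qed.

Lemma card_supp B e u : #|supp (lta_act B e u)| = (2 ^ (m - #|u|))%N.
Proof.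
rewrite -(@solcard m u (cc B e)); last exact: cc_dep.
by apply: eq_card => x; rewrite !inE act1.
Qed.

Lemma card_suppI B e C d f g :
  (#|supp (lta_act B e f) :&: supp (lta_act C d g)| <= 2 ^ (m - #|f :|: g|))%N.
Proof.
rewrite -(@solcard m (f :|: g) (fun i x => if i \in f then cc B e i x else cc C d i x)).
  apply: subset_leq_card; apply/subsetP => x; rewrite !inE !act1.
  move=> /andP [/forall_inP Hf /forall_inP Hg]; apply/forall_inP => i.
  rewrite inE; case: ifP => [/Hf //| _ /= /Hg //].
move=> i x y H; case: ifP => _; exact: cc_dep.
Qed.

Lemma pointxx (x : point m) : x + x = 0.
Proof. by apply/ffunP => i; rewrite !ffunE F2xx. Qed.

Lemma supp_closed B e u x y z :
  x \in supp (lta_act B e u) -> y \in supp (lta_act B e u) -> z \in supp (lta_act B e u) ->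
  x + y + z \in supp (lta_act B e u).
Proof.
rewrite !inE !act1 => /forall_inP Hx /forall_inP Hy /forall_inP Hz.
apply/forall_inP => i iu; rewrite !ffunE (eqP (Hx i iu)) (eqP (Hy i iu)) (eqP (Hz i iu)).
rewrite /cc F2_3; apply/eqP; congr (_ + _ + _).
rewrite -!big_split /=; apply: eq_bigr => j _; by rewrite !ffunE !mulrDr.
Qed.

Lemma F2_01 (a : BF m) x : x \notin supp a -> a x = 0.
Proof. by rewrite inE; case: (F2cases (a x)) => ->. Qed.
Lemma F2_1 (a : BF m) x : x \in supp a -> a x = 1.
Proof. by rewrite inE => /eqP. Qed.

End Act.
From mathcomp Require Import zify.

Lemma key m (f g : {set 'I_m}) B1 e1 B2 e2 C1 d1 C2 d2 :
  #|f| = #|g| -> (#|f :&: g| + 3)%N = #|f| ->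
  (forall x, lta_act B1 e1 f x + lta_act C1 d1 g x = lta_act B2 e2 f x + lta_act C2 d2 g x) ->
  supp (lta_act B1 e1 f) \subset supp (lta_act B2 e2 f).
Proof.
move=> Efg Ei Hs.
set a1 := lta_act B1 e1 f; set a2 := lta_act B2 e2 f.
set b1 := lta_act C1 d1 g; set b2 := lta_act C2 d2 g.
apply/subsetPn => -[p pA1 pA2].
have EU : #|f :|: g| = (#|f| + 3)%N.
  have := cardsUI f g; rewrite -Efg; lia.
have Um : (#|f :|: g| <= m)%N by rewrite -[X in (_ <= X)%N](card_ord m); apply: max_card.
set k := (2 ^ (m - #|f :|: g|))%N.
have k0 : (0 < k)%N by rewrite expn_gt0.
have N8 : #|supp a1| = (8 * k)%N.
  rewrite card_supp /k EU; have -> : (m - #|f| = 3 + (m - (#|f| + 3)))%N by lia.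
  by rewrite expnD.
have D1 : (#|supp a1 :\: supp a2| <= 2 * k)%N.
  apply: (leq_trans (n := #|(supp a1 :&: supp b1) :|: (supp a1 :&: supp b2)|)).
    apply: subset_leq_card; apply/subsetP => x; rewrite !inE => /andP [xa2 xa1].
    have a20 : a2 x = 0 by case: (F2cases (a2 x)) xa2 => -> //; rewrite eqxx.
    have := Hs x; rewrite a20 (eqP xa1) add0r.
    case: (F2cases (b1 x)) => -> ; last by rewrite eqxx.
    by rewrite addr0 => <-; rewrite !eqxx orbT.
  rewrite cardsU.
  have h1 := card_suppI B1 e1 C1 d1 f g; have h2 := card_suppI B1 e1 C2 d2 f g.
  apply: (leq_trans (leq_subr _ _)); rewrite mul2n -addnn; exact: leq_add h1 h2.
have D2 : (#|supp a1 :&: supp a2| <= #|supp a1 :\: supp a2|)%N.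
  case: (set_0Vmem (supp a1 :&: supp a2)) => [-> | [c]]; first by rewrite cards0.
  rewrite inE => /andP [cA1 cA2].
  rewrite -(card_imset _ (addIr (c + p))).
  apply: subset_leq_card; apply/subsetP => y /imsetP [x]; rewrite inE => /andP [xA1 xA2] ->.
  rewrite inE addrA; apply/andP; split; last exact: supp_closed.
  apply/negP => H; move/negP: pA2; apply.
  have := supp_closed H xA2 cA2.
  have -> // : x + c + p + x + c = p.
  by apply/ffunP => i; rewrite !ffunE F2_xcp.
have := cardsID (supp a2) (supp a1).
lia.
Qed.
Lemma core m (f g : {set 'I_m}) B1 e1 B2 e2 C1 d1 C2 d2 :
  #|f| = #|g| -> (#|f :&: g| + 3)%N = #|f| ->
  lta_act B1 e1 f + lta_act C1 d1 g = lta_act B2 e2 f + lta_act C2 d2 g ->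
  lta_act B1 e1 f = lta_act B2 e2 f.
Proof.
move=> Efg Ei E.
have Hs x : lta_act B1 e1 f x + lta_act C1 d1 g x = lta_act B2 e2 f x + lta_act C2 d2 g x.
  by have /ffunP /(_ x) := E; rewrite !ffunE.
have S1 := key Efg Ei Hs.
have S2 : supp (lta_act B2 e2 f) \subset supp (lta_act B1 e1 f).
  by apply: (key Efg Ei) => x; symmetry; exact: Hs.
apply/ffunP => x; case: (boolP (x \in supp (lta_act B1 e1 f))) => H.
  by rewrite (F2_1 H) (F2_1 (subsetP S1 _ H)).
have H' : x \notin supp (lta_act B2 e2 f) by apply: contra H; apply: (subsetP S2).
by rewrite (F2_01 H) (F2_01 H').
Qed.

Theorem mainTheorem12 (m : nat) (I : {set monomial m}) (f g : monomial m) :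
  decreasing I ->
  f \in I -> g \in I ->
  #|f| = \max_(u in I) #|u| ->
  #|g| = \max_(u in I) #|u| ->
  (#|f :&: g| + 3)%N = \max_(u in I) #|u| ->
  #|setsum (lta_orbit f) (lta_orbit g)| = (#|lta_orbit f| * #|lta_orbit g|)%N.
Proof.
move=> _ _ _ Ef Eg Ei.
have Efg : #|f| = #|g| by rewrite Ef Eg.
have Ei' : (#|f :&: g| + 3)%N = #|f| by rewrite Ei Ef.
rewrite /setsum curry_imset2X card_in_imset ?cardsX //.
move=> [a1 b1] [a2 b2]; rewrite !inE /= => /andP [ha1 hb1] /andP [ha2 hb2] E.
move: ha1 ha2 hb1 hb2 E => /imsetP [p1 _ ->] /imsetP [p2 _ ->] /imsetP [q1 _ ->] /imsetP [q2 _ ->] /= E.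
have Ea := core Efg Ei' E.
by rewrite Ea in E *; rewrite (addrI _ E).
Qed.
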